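(* Let $(\lambda_n)_n$, $(\nu_n)_n$ and, for each $j\in\mathbb{N}$, $(\rho_{j,n})_n$ be sequences of positive numbers, and assume $\lambda_n/\nu_n\to0$ as $n\to\infty$. Then, after extraction of a subsequence in $n$, there exists a sequence $(\mu_n)_n$ of positive numbers such that $\lambda_n/\mu_n\to0$ and $\mu_n/\nu_n\to0$, and for every $k\in\mathbb{N}$, either $\mu_n/\rho_{k,n}\to0$ or $\rho_{k,n}/\mu_n\to0$. *)

(* Defs.v *)
From Stdlib Require Export Reals.
Open Scope R_scope.

Definition extraction (phi : nat -> nat) : Prop :=
  forall m n : nat, (m < n)%nat -> (phi m < phi n)%nat.

(* Main.v *)
Require Import Defs.
From Stdlib Require Import Reals Lra Lia ClassicalEpsilon ClassicalDescription.
Open Scope R_scope.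

Definition infinite (P : nat -> Prop) := forall N, exists n, (N <= n)%nat /\ P n.

Record st := mkst { al : R; be : R; Sx : nat -> Prop }.

Definition step (D : nat -> R) (q : nat -> nat -> R) (k : nat) (s : st) : st :=
  let c := (al s + be s)/2 in let w := (be s - al s)/3 in
  let P := fun n => Sx s n /\ c * D n <= q k n in
  match excluded_middle_informative (infinite P) with
  | left _ => mkst (al s) (al s + w) P
  | right _ => mkst (be s - w) (be s) (fun n => Sx s n /\ ~ (c * D n <= q k n))
  end.

Fixpoint stk D q k : st := match k with
  | O => mkst (1/3) (2/3) (fun _ => True)
  | S k => step D q k (stk D q k) end.

Lemma step_inf D q k s : infinite (Sx s) -> infinite (Sx (step D q k s)).
Proof.
  intros H. unfold step.
  destruct (excluded_middle_informative _) as [h|h]; simpl; auto.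
  intros N.
  destruct (classic (exists n, (N <= n)%nat /\ Sx s n /\ ~ ((al s + be s) / 2 * D n <= q k n))) as [e|e]; auto.
  exfalso; apply h. intros M.
  destruct (H (Nat.max N M)) as [n [h1 h2]].
  exists n; split; [lia|]. split; auto.
  apply NNPP; intro hn; apply e; exists n; repeat split; auto; lia.
Qed.

Lemma stk_inf D q k : infinite (Sx (stk D q k)).
Proof. induction k; simpl. intros N; exists N; split; auto. now apply step_inf. Qed.

Lemma step_props D q k s : al s < be s ->
  let c := (al s + be s)/2 in let w := (be s - al s)/3 in
  al s <= al (step D q k s) /\ be (step D q k s) <= be s /\
  al (step D q k s) < be (step D q k s) /\
  (forall n, Sx (step D q k s) n -> Sx s n) /\
  ((be (step D q k s) = c - w/2 /\ forall n, Sx (step D q k s) n -> c * D n <= q k n) \/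
   (al (step D q k s) = c + w/2 /\ forall n, Sx (step D q k s) n -> q k n < c * D n)).
Proof.
  intros H c w. unfold step.
  destruct (excluded_middle_informative _) as [h|h]; simpl.
  - unfold c, w; repeat split; try lra; try tauto.
    left; split; [lra| tauto].
  - unfold c, w; repeat split; try lra; try tauto.
    right; split; [lra|]. intros n [_ hn]; lra.
Qed.

Lemma stk_lt D q k : al (stk D q k) < be (stk D q k).
Proof. induction k; simpl. lra. now apply step_props. Qed.

Lemma stk_mono D q k j : (k <= j)%nat ->
  al (stk D q k) <= al (stk D q j) /\ be (stk D q j) <= be (stk D q k) /\
  (forall n, Sx (stk D q j) n -> Sx (stk D q k) n).
Proof.
  induction 1. repeat split; try lra; auto.
  destruct IHle as [h1 [h2 h3]]. simpl.
  destruct (step_props D q m _ (stk_lt D q m)) as [g1 [g2 [_ [g4 _]]]].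
  repeat split; try lra. auto.
Qed.

Definition pick (P : nat -> Prop) (N : nat) : nat :=
  epsilon (inhabits 0%nat) (fun n => (N <= n)%nat /\ P n).

Lemma pick_spec P N : infinite P -> (N <= pick P N)%nat /\ P (pick P N).
Proof. intros H. unfold pick. apply epsilon_spec. apply H. Qed.

Fixpoint phi D q n : nat := match n with
  | O => pick (Sx (stk D q 0)) 0
  | S n => pick (Sx (stk D q (S n))) (S (phi D q n)) end.

Lemma phi_S D q n : Sx (stk D q n) (phi D q n).
Proof. destruct n; [exact I|]. apply (pick_spec (Sx (stk D q (S n)))), stk_inf. Qed.

Lemma phi_inc D q n : (phi D q n < phi D q (S n))%nat.
Proof. simpl. pose proof (pick_spec (Sx (stk D q (S n))) (S (phi D q n)) (stk_inf D q (S n))) as [h _]. exact h. Qed.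

Lemma phi_extr D q m n : (m < n)%nat -> (phi D q m < phi D q n)%nat.
Proof. induction 1. apply phi_inc. pose proof (phi_inc D q m0). lia. Qed.

Lemma phi_ge D q n : (n <= phi D q n)%nat.
Proof. induction n. lia. pose proof (phi_inc D q n). lia. Qed.

Lemma ln_div' x y : 0 < x -> 0 < y -> ln (x / y) = ln x - ln y.
Proof. intros; unfold Rdiv; rewrite ln_mult, ln_Rinv; auto with real. Qed.

Lemma ratio_cv (x y : nat -> R) : (forall n, 0 < x n) -> (forall n, 0 < y n) ->
  (forall M, exists N, forall n, (N <= n)%nat -> ln (x n) - ln (y n) <= - M) ->
  Un_cv (fun n => x n / y n) 0.
Proof.
  intros hx hy H eps he.
  destruct (H (- ln eps + 1)) as [N HN]. exists N. intros n hn.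
  specialize (HN n hn). unfold R_dist. rewrite Rminus_0_r.
  assert (e : x n / y n = exp (ln (x n) - ln (y n))).
  { rewrite <- ln_div' by auto. rewrite exp_ln; auto. apply Rdiv_lt_0_compat; auto. }
  rewrite e, Rabs_right by (left; apply exp_pos).
  rewrite <- (exp_ln eps he). apply exp_increasing. lra.
Qed.

Lemma ddn c (E z : nat -> R) N0 : 0 < c ->
  (forall M, exists N, forall n, (N <= n)%nat -> M <= E n) ->
  (forall n, (N0 <= n)%nat -> z n <= - c * E n) ->
  forall M, exists N, forall n, (N <= n)%nat -> z n <= - M.
Proof.
  intros hc HE Hz M. destruct (HE (M / c)) as [N HN]. exists (Nat.max N N0).
  intros n hn. specialize (HN n ltac:(lia)). specialize (Hz n ltac:(lia)).
  assert (c * (M / c) <= c * E n) by (apply Rmult_le_compat_l; lra).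
  replace (c * (M / c)) with M in H by (field; lra). lra.
Qed.

Lemma Dgrow (lam nu : nat -> R) (Hlam : forall n, 0 < lam n) (Hnu : forall n, 0 < nu n)
  (Hlim : Un_cv (fun n => lam n / nu n) 0) :
  forall M, exists N, forall n, (N <= n)%nat -> M <= ln (nu n) - ln (lam n).
Proof.
  intros M. destruct (Hlim (exp (- M)) (exp_pos _)) as [N HN]. exists N.
  intros n hn. specialize (HN n hn). unfold R_dist in HN. rewrite Rminus_0_r in HN.
  assert (p : 0 < lam n / nu n) by (apply Rdiv_lt_0_compat; auto).
  rewrite Rabs_right in HN by lra.
  apply ln_increasing in HN; auto. rewrite ln_exp, ln_div' in HN; auto. lra.
Qed.
Theorem claimB1 (lam nu : nat -> R) (rho : nat -> nat -> R)
  (Hlam : forall n, 0 < lam n) (Hnu : forall n, 0 < nu n)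
  (Hrho : forall j n, 0 < rho j n)
  (Hlim : Un_cv (fun n => lam n / nu n) 0) :
  exists (phi : nat -> nat) (mu : nat -> R),
    extraction phi /\
    (forall n, 0 < mu n) /\
    Un_cv (fun n => lam (phi n) / mu n) 0 /\
    Un_cv (fun n => mu n / nu (phi n)) 0 /\
    (forall k : nat,
        Un_cv (fun n => mu n / rho k (phi n)) 0 \/
        Un_cv (fun n => rho k (phi n) / mu n) 0).
Proof.
  set (D := fun n => ln (nu n) - ln (lam n)).
  set (q := fun k n => ln (rho k n) - ln (lam n)).
  set (s := fun n => al (stk D q n)).
  set (m := fun n => ln (lam (phi D q n)) + s n * D (phi D q n)).
  exists (phi D q), (fun n => exp (m n)).
  assert (HG : forall M, exists N, forall n, (N <= n)%nat -> M <= D (phi D q n)).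
  { intros M. destruct (Dgrow lam nu Hlam Hnu Hlim M) as [N HN]. exists N.
    intros n hn. apply HN. pose proof (phi_ge D q n). lia. }
  assert (Hs : forall n, 1/3 <= s n <= 2/3).
  { intros n. destruct (stk_mono D q 0 n ltac:(lia)) as [h1 [h2 _]].
    pose proof (stk_lt D q n). unfold s; simpl in *; lra. }
  destruct (HG 0) as [N0 HN0].
  assert (third : 0 < 1/3) by lra.
  repeat split.
  - intros a b; apply phi_extr.
  - intros; apply exp_pos.
  - apply ratio_cv; auto. intros; apply exp_pos.
    apply (ddn (1/3) _ _ N0 third HG). intros n hn. rewrite ln_exp.
    specialize (HN0 n hn). specialize (Hs n). unfold m. nra.
  - apply ratio_cv; auto. intros; apply exp_pos.
    apply (ddn (1/3) _ _ N0 third HG). intros n hn. rewrite ln_exp.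
    specialize (HN0 n hn). specialize (Hs n). unfold m, D in *. nra.
  - intros k.
    pose proof (stk_lt D q k) as hlt.
    destruct (step_props D q k _ hlt) as [_ [_ [_ [_ Hc]]]].
    set (c := (al (stk D q k) + be (stk D q k)) / 2) in *.
    set (w := (be (stk D q k) - al (stk D q k)) / 3) in *.
    assert (hw : 0 < w / 2) by (unfold w; lra).
    assert (Hin : forall n, (S k <= n)%nat ->
      al (stk D q (S k)) <= s n <= be (stk D q (S k)) /\ Sx (stk D q (S k)) (phi D q n)).
    { intros n hn. destruct (stk_mono D q (S k) n hn) as [h1 [h2 h3]].
      pose proof (stk_lt D q n). unfold s. split; [lra|]. apply h3, phi_S. }
    destruct Hc as [[hb hP] | [ha hP]].
    + left. apply ratio_cv; auto. intros; apply exp_pos.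
      apply (ddn (w/2) _ _ (Nat.max N0 (S k)) hw HG). intros n hn. rewrite ln_exp.
      specialize (HN0 n ltac:(lia)). destruct (Hin n ltac:(lia)) as [[_ h2] h3].
      specialize (hP _ h3). change (stk D q (S k)) with (step D q k (stk D q k)) in h2. rewrite hb in h2.
      unfold m, q in *. nra.
    + right. apply ratio_cv; auto. intros; apply exp_pos.
      apply (ddn (w/2) _ _ (Nat.max N0 (S k)) hw HG). intros n hn. rewrite ln_exp.
      specialize (HN0 n ltac:(lia)). destruct (Hin n ltac:(lia)) as [[h2 _] h3].
      specialize (hP _ h3). change (stk D q (S k)) with (step D q k (stk D q k)) in h2. rewrite ha in h2.
      unfold m, q in *. nra.
Qed.
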